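(* Let $G$ be a connected graph with $n\geq 2$ vertices and $m$ edges, and let $S(G)$ be its subdivision. Then $$R^*(S(G))=8R^*(G)+2m(2m-2n+1).$$
   Context: All graphs are finite, undirected, without loops or multiple edges. For a connected graph $H$ and vertices $i,j$, the resistance distance $\Omega_{ij}$ is the effective resistance between $i$ and $j$ in the electrical network obtained from $H$ by replacing each edge by a unit resistor. With $d_i$ the degree of vertex $i$ in $H$ and the sum over unordered pairs of distinct vertices of $H$, the multiplicative degree-Kirchhoff index is $R^*(H)=\sum_{\{i,j\}\subseteq V(H)}d_id_j\Omega_{ij}$ (degrees and resistances taken in $H$). The subdivision $S(G)$ is the graph obtained from $G$ by replacing every edge with a path of length two (i.e., inserting one new vertex of degree 2 on each edge). *)

(* Defs.v *)
From HB Require Import structures.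
From mathcomp Require Import all_boot all_order all_algebra.
Set Implicit Arguments. Unset Strict Implicit. Unset Printing Implicit Defensive.
Import Order.TTheory GRing.Theory Num.Theory.
Local Open Scope ring_scope.

(* A finite simple graph on the vertex type V is given by its edge set
   E : {set {set V}}, every edge being a 2-element set of vertices. *)
Section Graphs.
Variable V : finType.
Implicit Types (E : {set {set V}}).

Definition simple_graph E : Prop := forall e, e \in E -> #|e| = 2%N.

Definition adj E : rel V := fun u v => (u != v) && ([set u; v] \in E).

Definition deg E (v : V) : nat := #|[set u | adj E v u]|.

Definition connected_graph E : Prop := forall u v : V, connect (adj E) u v.

Definition laplacian (R : fieldType) E : 'M[R]_#|V| :=
  \matrix_(i, j) (if i == j then (deg E (enum_val i))%:R
                  else if adj E (enum_val i) (enum_val j) then -1 else 0).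

(* Resistance distance: inject a unit current at i and extract it at j;
   phi is a potential satisfying Kirchhoff's and Ohm's laws
   (phi *m L = e_i - e_j, L symmetric), and Omega_ij = phi_i - phi_j. *)
Definition resistance (R : fieldType) E (i j : V) : R :=
  let u : 'rV[R]_#|V| := delta_mx 0 (enum_rank i) - delta_mx 0 (enum_rank j) in
  let phi := u *m pinvmx (laplacian R E) in
  phi 0 (enum_rank i) - phi 0 (enum_rank j).

(* multiplicative degree-Kirchhoff index: sum over unordered pairs {i,j}, i != j *)
Definition mult_deg_kirchhoff (R : fieldType) E : R :=
  \sum_(i : V) \sum_(j : V | (enum_rank i < enum_rank j)%N)
     (deg E i)%:R * (deg E j)%:R * resistance R E i j.

End Graphs.

(* Subdivision S(G): vertices are the old vertices plus one new vertex per edge;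
   the new vertex of edge e is joined to the two endpoints of e. *)
Section Subdivision.
Variable V : finType.
Variable E : {set {set V}}.

Definition sub_vertex : finType := (V + {x : {set V} | x \in E})%type.

Definition sub_edges : {set {set sub_vertex}} :=
  [set s : {set sub_vertex} |
     [exists v : V, exists e : {x : {set V} | x \in E},
        (v \in val e) && (s == [set (inl v : sub_vertex); inr e])]].

End Subdivision.

(* Main.v *)
Require Import Defs.
From HB Require Import structures.
From mathcomp Require Import all_boot all_order all_algebra.
From mathcomp Require Import ring lra.
Set Implicit Arguments. Unset Strict Implicit. Unset Printing Implicit Defensive.
Import Order.TTheory GRing.Theory Num.Theory.
Local Open Scope ring_scope.

Section Gen.
Variable R : realFieldType.
Variable W : finType.
Variable F : {set {set W}}.

Definition lap (f : W -> R) (w : W) : R :=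
  (deg F w)%:R * f w - \sum_(u | adj F w u) f u.

Lemma adjC u v : adj F u v = adj F v u.
Proof. by rewrite /adj eq_sym setUC. Qed.

Lemma adj_irr u : adj F u u = false.
Proof. by rewrite /adj eqxx. Qed.

Lemma degE w : (deg F w)%:R = \sum_(u | adj F w u) (1 : R).
Proof. by rewrite /deg cardsE -sum1_card natr_sum. Qed.

Definition rv (f : W -> R) : 'rV[R]_#|W| := \row_i f (enum_val i).

Lemma rv_lap (f : W -> R) : rv f *m laplacian R F = rv (lap f).
Proof.
apply/rowP => j; rewrite -[j]enum_valK; move: (enum_val j) => x {j}.
rewrite !mxE enum_rankK.
under eq_bigr => i _ do rewrite mxE -[in laplacian _ _ i _](enum_valK i).
rewrite -(big_enum_val (A := predT) (fun w => f w * laplacian R F (enum_rank w) (enum_rank x))) /=.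
rewrite (bigD1 x) //= mxE !enum_rankK eqxx.
rewrite /lap mulrC; congr (_ + _).
rewrite (bigID (fun u => adj F x u)) /= addrC big1; last first.
  move=> i /andP[ij na]; rewrite mxE !enum_rankK (inj_eq enum_rank_inj) (negbTE ij) adjC (negbTE na) mulr0 //.
rewrite add0r -sumrN; apply: eq_big => i.
  by case: (eqVneq i x) => [->|]; rewrite ?adj_irr ?andbT.
move=> /andP[ij a]; rewrite mxE !enum_rankK (inj_eq enum_rank_inj) (negbTE ij) adjC a mulrN1 //.
Qed.
Lemma lap_const (c : R) w : lap (fun _ => c) w = 0.
Proof. rewrite /lap degE mulr_suml; under eq_bigr do rewrite mul1r; by rewrite subrr. Qed.

Lemma lapD f g w : lap (fun x => f x + g x) w = lap f w + lap g w.
Proof. by rewrite /lap big_split /= mulrDr opprD addrACA. Qed.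

Lemma lapZ (c : R) f w : lap (fun x => c * f x) w = c * lap f w.
Proof. by rewrite /lap -mulr_sumr mulrBr mulrCA. Qed.

Lemma lap_sum (I : finType) (P : pred I) (f : I -> W -> R) w :
  lap (fun x => \sum_(i | P i) f i x) w = \sum_(i | P i) lap (f i) w.
Proof.
rewrite /lap mulr_sumr (exchange_big_dep P) //= -sumrB.
by apply: eq_bigr => i Pi; congr (_ - _); apply: eq_bigl => u; rewrite Pi andbT.
Qed.

Lemma lap_recip f g : \sum_w f w * lap g w = \sum_w lap f w * g w.
Proof.
rewrite /lap.
under eq_bigr => w _ do rewrite mulrBr.
under [RHS]eq_bigr => w _ do rewrite mulrBl.
rewrite !sumrB; congr (_ - _).
  by apply: eq_bigr => w _; rewrite mulrCA mulrA.
under eq_bigr => w _ do rewrite mulr_sumr big_mkcond /=.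
under [RHS]eq_bigr => w _ do rewrite mulr_suml big_mkcond /=.
rewrite exchange_big /=; apply: eq_bigr => u _; apply: eq_bigr => w _.
by rewrite adjC; case: ifP.
Qed.

Lemma lap_sum0 f : \sum_w lap f w = 0.
Proof.
transitivity (\sum_w 1 * lap f w); first by apply: eq_bigr => w _; rewrite mul1r.
rewrite lap_recip big1 // => w _; by rewrite lap_const mul0r.
Qed.

Lemma lap0_const f : connected_graph F -> (forall w, lap f w = 0) ->
  forall u v, f u = f v.
Proof.
move=> Hc H0 u v.
have [w0 _ Hmax] := @Order.TotalTheory.arg_maxP _ _ _ u predT f isT.
have key : forall x y, adj F x y -> f x = f w0 -> f y = f w0.
  move=> x y axy fx; move: (H0 x); rewrite /lap degE mulr_suml fx.
  move/eqP; rewrite subr_eq0 -subr_eq0 -sumrB.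
  move/eqP/psumr_eq0P => H.
  apply/eqP; rewrite eq_sym -subr_eq0; apply/eqP.
  by rewrite -[f w0]mul1r; apply: H => // i _; rewrite mul1r subr_ge0; apply: Hmax.
have cl : closed (adj F) [pred x | f x == f w0].
  move=> x y axy /=; apply/eqP/eqP; first exact: key.
  by apply: key; rewrite adjC.
have Hall : forall z, f z = f w0.
  move=> z; have := closed_connect cl (Hc w0 z); rewrite !inE eqxx.
  by move/esym/eqP.
by rewrite !Hall.
Qed.
Definition delta (i w : W) : R := (w == i)%:R.

Lemma rvE (f : W -> R) w : rv f 0 (enum_rank w) = f w.
Proof. by rewrite mxE enum_rankK. Qed.

Lemma rv_inj (f g : W -> R) : rv f = rv g -> forall w, f w = g w.
Proof. by move=> H w; rewrite -!rvE H. Qed.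

Lemma resistance_char f i j : connected_graph F ->
  (forall w, lap f w = delta i w - delta j w) ->
  resistance R F i j = f i - f j.
Proof.
move=> Hc Hf.
set u : 'rV[R]_#|W| := delta_mx 0 (enum_rank i) - delta_mx 0 (enum_rank j).
have Hu : u = rv f *m laplacian R F.
  rewrite rv_lap; apply/rowP => k; rewrite !mxE Hf /delta eqxx /=.
  have e : forall x, (k == enum_rank x) = (enum_val k == x).
    by move=> x; apply/eqP/eqP => [->|<-]; [rewrite enum_rankK | rewrite enum_valK].
  by rewrite !e.
have sub : (u <= laplacian R F)%MS by apply/submxP; exists (rv f).
pose g w := (u *m pinvmx (laplacian R F)) 0 (enum_rank w).
have Hg : rv g = u *m pinvmx (laplacian R F).
  by apply/rowP => k; rewrite mxE /g enum_valK.
have Hlg : forall w, lap g w = lap f w.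
  apply: rv_inj; rewrite -!rv_lap Hg mulmxKpV //.
have Hh : forall w, lap (fun x => g x + (-1) * f x) w = 0.
  by move=> w; rewrite lapD lapZ Hlg mulN1r subrr.
have := lap0_const Hc Hh i j.
rewrite /resistance /= -/u -/(g i) -/(g j) => H.
move: H; rewrite !mulN1r /g; lra.
Qed.
Lemma rv_of (v : 'rV[R]_#|W|) : v = rv (fun w => v 0 (enum_rank w)).
Proof. by apply/rowP => k; rewrite mxE enum_valK. Qed.

Lemma mulA_E (v : 'rV[R]_#|W|) w :
  (v *m (laplacian R F + const_mx 1)) 0 (enum_rank w) =
  lap (fun w => v 0 (enum_rank w)) w + \sum_u v 0 (enum_rank u).
Proof.
rewrite mulmxDr mxE {1}(rv_of v) rv_lap rvE; congr (_ + _).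
rewrite mxE (big_enum_val (A := predT) (fun u => v 0 (enum_rank u))) /=.
by apply: eq_bigr => k _; rewrite mxE mulr1 enum_valK.
Qed.

Lemma lapJ_sol (phi t : W -> R) : (0 < #|W|)%N -> \sum_w t w = 0 ->
  (forall w, lap phi w + \sum_u phi u = t w) ->
  \sum_u phi u = 0 /\ forall w, lap phi w = t w.
Proof.
move=> Hn Ht H.
have n0 : (#|W|%:R : R) != 0 by rewrite pnatr_eq0 -lt0n.
have s0 : \sum_u phi u = 0.
  move: Ht; under eq_bigr => w _ do rewrite -H.
  rewrite big_split /= lap_sum0 add0r sumr_const -mulr_natr.
  by move/eqP; rewrite mulf_eq0 (negbTE n0) orbF => /eqP.
by split => // w; rewrite -H s0 addr0.
Qed.

Lemma lapJ_unit : connected_graph F -> (0 < #|W|)%N ->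
  (laplacian R F + const_mx 1) \in unitmx.
Proof.
move=> Hc Hn; rewrite -row_free_unit -kermx_eq0; apply/eqP/row_matrixP => k.
rewrite row0; set v := row k _.
have Hv : v *m (laplacian R F + const_mx 1) = 0.
  by apply/sub_kermxP; exact: row_sub.
pose phi w := v 0 (enum_rank w).
have [s0 Hl] : \sum_u phi u = 0 /\ forall w, lap phi w = (fun _ => 0) w.
  apply: lapJ_sol => //; first by rewrite big1.
  by move=> w; rewrite -mulA_E Hv mxE.
have Hc' := lap0_const Hc Hl.
have [w0 _] := card_gt0P Hn.
have : \sum_u phi u = (#|W|%:R) * phi w0.
  rewrite mulr_natl -sumr_const; apply: eq_bigr => u _; exact: Hc'.
rewrite s0 => /esym/eqP; rewrite mulf_eq0 pnatr_eq0 eqn0Ngt Hn /= => /eqP p0.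
apply/rowP => j; rewrite [RHS]mxE -[j]enum_valK; have := Hc' (enum_val j) w0; rewrite p0; exact.
Qed.
Definition lapsol (t : W -> R) : W -> R :=
  fun w => (rv t *m invmx (laplacian R F + const_mx 1)) 0 (enum_rank w).

Lemma lapsolP (t : W -> R) : connected_graph F -> (0 < #|W|)%N ->
  \sum_w t w = 0 -> forall w, lap (lapsol t) w = t w.
Proof.
move=> Hc Hn Ht.
set A := laplacian R F + const_mx 1.
have uA : A \in unitmx by exact: lapJ_unit.
set x := rv t *m invmx A.
have Hx : x *m A = rv t by rewrite mulmxKV.
have [] // := @lapJ_sol (lapsol t) t Hn Ht.
by move=> w; rewrite -mulA_E -/A Hx rvE.
Qed.

Lemma lapB f g w : lap (fun x => f x - g x) w = lap f w - lap g w.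
Proof. rewrite /lap sumrB mulrBr; ring. Qed.

Lemma sum_delta (f : W -> R) j : \sum_w f w * delta j w = f j.
Proof.
rewrite (bigD1 j) //= /delta eqxx mulr1 big1 ?addr0 // => w /negbTE ->.
by rewrite mulr0.
Qed.

Lemma pair_sum (g : W -> W -> R) : (forall i j, g i j = g j i) ->
  (forall i, g i i = 0) ->
  \sum_i \sum_(j | (enum_rank i < enum_rank j)%N) g i j =
  (\sum_i \sum_j g i j) / 2.
Proof.
move=> gs g0.
have E : forall i j, g i j = (if (enum_rank i < enum_rank j)%N then g i j else 0)
                     + (if (enum_rank j < enum_rank i)%N then g j i else 0).
  move=> i j; case: (ltngtP (enum_rank i) (enum_rank j)) => [_|_|e].
  - by rewrite addr0.
  - by rewrite add0r gs.
  - by move/val_inj/enum_rank_inj: e => ->; rewrite g0 addr0.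
have -> : \sum_i \sum_j g i j =
   \sum_i \sum_j (if (enum_rank i < enum_rank j)%N then g i j else 0)
   + \sum_i \sum_j (if (enum_rank j < enum_rank i)%N then g j i else 0).
  rewrite -big_split; apply: eq_bigr => i _; rewrite -big_split; apply: eq_bigr => j _.
  exact: E.
rewrite [X in _ + X]exchange_big /=.
under eq_bigr => i _ do rewrite big_mkcond.
field.
by [].
Qed.
Definition Dsum : R := \sum_w (deg F w)%:R.

Lemma kirchhoff_formula (y : W -> W -> R) : connected_graph F -> Dsum != 0 ->
  (forall k w, lap (y k) w = delta k w - (deg F w)%:R / Dsum) ->
  (forall k, \sum_w y k w * (deg F w)%:R = 0) ->
  mult_deg_kirchhoff R F = Dsum * \sum_k (deg F k)%:R * y k k.
Proof.
move=> Hc D0 Hy Ho.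
have Hsum : forall f : W -> R, \sum_w f w * ((deg F w)%:R / Dsum) = (\sum_w f w * (deg F w)%:R) / Dsum.
  by move=> f; rewrite mulr_suml; apply: eq_bigr => w _; rewrite mulrA.
have ys : forall k j, y k j = y j k.
  move=> k j; have := lap_recip (y k) (y j).
  under eq_bigr => w _ do rewrite Hy mulrBr.
  under [in RHS]eq_bigr => w _ do rewrite Hy mulrBl.
  rewrite !sumrB sum_delta Hsum Ho.
  under [in RHS]eq_bigr => w _ do rewrite mulrC.
  rewrite sum_delta.
  under [in RHS]eq_bigr => w _ do rewrite mulrC.
  by rewrite Hsum Ho !mul0r !subr0.
have res : forall i j, resistance R F i j = y i i - y i j - y j i + y j j.
  move=> i j; rewrite (resistance_char (f := fun w => y i w - y j w)) //.
    by rewrite (ys j i); ring.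
  by move=> w; rewrite lapB !Hy; ring.
rewrite /mult_deg_kirchhoff.
under eq_bigr => i _ do under eq_bigr => j _ do rewrite res.
rewrite (pair_sum (g := fun i j => (deg F i)%:R * (deg F j)%:R * (y i i - y i j - y j i + y j j))); last 2 first.
- by move=> i j; rewrite (ys i j); ring.
- by move=> i; ring.
set T := \sum_k (deg F k)%:R * y k k.
have inner : forall i, \sum_j (deg F i)%:R * (deg F j)%:R * (y i i - y i j - y j i + y j j)
   = (deg F i)%:R * y i i * Dsum + (deg F i)%:R * T.
  move=> i.
  transitivity (\sum_j ((deg F i)%:R * y i i * (deg F j)%:R
       - 2 * (deg F i)%:R * (y i j * (deg F j)%:R) + (deg F i)%:R * ((deg F j)%:R * y j j))).
    by apply: eq_bigr => j _; rewrite (ys j i); ring.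
  rewrite big_split sumrB /= -!mulr_sumr Ho /T /Dsum; ring.
under eq_bigr => i _ do rewrite inner.
rewrite big_split /= -!mulr_suml -/Dsum -/T; field.
by [].
Qed.
End Gen.

Section Sub.
Variable R : realFieldType.
Variable V : finType.
Variable E : {set {set V}}.
Hypothesis HS : simple_graph E.

Local Notation Ev := {x : {set V} | x \in E}.

Lemma edge_eq (e : Ev) v u : v \in val e -> u \in val e -> u != v ->
  val e = [set v; u].
Proof.
move=> Hv Hu Huv; apply/eqP; rewrite eq_sym eqEcard subUset !sub1set Hv Hu /=.
by rewrite cards2 (HS (valP e)) eq_sym Huv.
Qed.

Lemma G0 v (g : V -> R) :
  \sum_(e : Ev | v \in val e) \sum_(u in val e | u != v) g u =
  \sum_(u | adj E v u) g u.
Proof.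
rewrite (exchange_big_dep xpredT) //= [RHS]big_mkcond /=; apply: eq_bigr => u _.
case: (eqVneq u v) => [->|Huv].
  by rewrite adj_irr big_pred0 // => e; rewrite !andbF.
rewrite /adj eq_sym Huv /=.
case: (boolP ([set v; u] \in E)) => Hin.
  rewrite (bigD1 (exist (fun x => x \in E) _ Hin)) //=; last by rewrite !inE !eqxx orbT.
  rewrite big1 ?addr0 // => e /andP [/andP [Hv /andP [Hu _]] He].
  case/eqP: He; apply: val_inj => /=; exact: edge_eq.
rewrite big_pred0 // => e; apply/negP => /andP [Hv /andP [Hu _]].
by move: (valP e); rewrite (edge_eq Hv Hu Huv) (negbTE Hin).
Qed.

Lemma deg_inc v : (deg E v)%:R = \sum_(e : Ev | v \in val e) (1 : R).
Proof.
rewrite degE -(G0 v (fun _ => 1)); apply: eq_bigr => e Hv.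
have H2 : \sum_(u in val e) (1 : R) = 2 by rewrite sumr_const (HS (valP e)).
rewrite (bigD1 v) //= in H2; lra.
Qed.

Lemma card_Ev : #|{: Ev}| = #|E|.
Proof. by rewrite card_sig; apply: eq_card => x; rewrite !inE. Qed.

Lemma handshake : Dsum R E = 2 * (#|E|)%:R.
Proof.
rewrite /Dsum; under eq_bigr => v _ do rewrite deg_inc.
rewrite (exchange_big_dep xpredT) //=.
transitivity (\sum_(e : Ev) (2 : R)).
  by apply: eq_bigr => e _; rewrite sumr_const (HS (valP e)).
rewrite sumr_const card_Ev.
by rewrite mulr_natr.
Qed.
Local Notation S := (sub_edges E).
Local Notation SV := (sub_vertex E).

Lemma in_subE (s : {set SV}) : (s \in S) =
  [exists v : V, exists e : Ev, (v \in val e) && (s == [set (inl v : SV); inr e])].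
Proof. by rewrite inE. Qed.

Lemma adjS_ll u v : adj S (inl u : SV) (inl v) = false.
Proof.
apply/negbTE; rewrite /adj negb_and; apply/orP; right; rewrite in_subE.
apply/negP => /existsP [w /existsP [e /andP [_ /eqP Heq]]].
have : (inr e : SV) \in [set (inl u : SV); inl v] by rewrite Heq !inE eqxx orbT.
by rewrite !inE.
Qed.

Lemma adjS_rr e f : adj S (inr e : SV) (inr f) = false.
Proof.
apply/negbTE; rewrite /adj negb_and; apply/orP; right; rewrite in_subE.
apply/negP => /existsP [w /existsP [g /andP [_ /eqP Heq]]].
have : (inl w : SV) \in [set (inr e : SV); inr f] by rewrite Heq !inE eqxx.
by rewrite !inE.
Qed.

Lemma adjS_lr v e : adj S (inl v : SV) (inr e) = (v \in val e).
Proof.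
rewrite /adj /= in_subE; apply/existsP/idP => [[w /existsP [f /andP [Hw /eqP Heq]]]|H].
  have : (inl v : SV) \in [set (inl w : SV); inr f] by rewrite -Heq !inE eqxx.
  rewrite !inE orbF => /eqP [->].
  have : (inr e : SV) \in [set (inl w : SV); inr f] by rewrite -Heq !inE eqxx orbT.
  by rewrite !inE => /eqP [->].
by exists v; apply/existsP; exists e; rewrite H eqxx.
Qed.

Lemma adjS_rl e v : adj S (inr e : SV) (inl v) = (v \in val e).
Proof. by rewrite adjC adjS_lr. Qed.

Lemma sumS_l v (f : SV -> R) :
  \sum_(s | adj S (inl v : SV) s) f s = \sum_(e : Ev | v \in val e) f (inr e).
Proof.
rewrite big_sumType /= big_pred0 ?add0r; last by move=> u; rewrite adjS_ll.
by apply: eq_bigl => e; rewrite adjS_lr.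
Qed.

Lemma sumS_r e (f : SV -> R) :
  \sum_(s | adj S (inr e : SV) s) f s = \sum_(a in val e) f (inl a).
Proof.
rewrite big_sumType /= [X in _ + X]big_pred0 ?addr0; last by move=> u; rewrite adjS_rr.
by apply: eq_bigl => a; rewrite adjS_rl.
Qed.

Lemma degS_l v : (deg S (inl v : SV))%:R = (deg E v)%:R :> R.
Proof. by rewrite degE sumS_l deg_inc. Qed.

Lemma degS_r e : (deg S (inr e : SV))%:R = 2 :> R.
Proof. by rewrite degE sumS_r sumr_const (HS (valP e)). Qed.

Lemma sumS (f : SV -> R) : \sum_s f s = \sum_v f (inl v) + \sum_(e : Ev) f (inr e).
Proof. by rewrite big_sumType. Qed.
Lemma connS : connected_graph E -> connected_graph S.
Proof.
move=> Hc.
have step : forall u v, adj E u v -> connect (adj S) (inl u : SV) (inl v).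
  move=> u v /andP [_ Hin].
  apply: (@connect_trans _ _ (inr (exist (fun x => x \in E) _ Hin) : SV)); apply: connect1.
    by rewrite adjS_lr /= !inE eqxx.
  by rewrite adjS_rl /= !inE eqxx orbT.
have lift : forall u v, connect (adj S) (inl u : SV) (inl v).
  move=> u v; case/connectP: (Hc u v) => p Hp ->.
  elim: p u Hp => [|w p IH] u /=; first by rewrite connect0.
  case/andP => a Hp; apply: connect_trans (step _ _ a) (IH _ Hp).
have toinl : forall s : SV, exists a, connect (adj S) s (inl a).
  case=> [a|e]; first by exists a; rewrite connect0.
  have : (0 < #|val e|)%N by rewrite (HS (valP e)).
  case/card_gt0P => a Ha; exists a; apply: connect1; by rewrite adjS_rl.
have sym : connect_sym (adj S) by apply: sym_connect_sym => x y; exact: adjC.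
move=> s t; have [a Ha] := toinl s; have [b Hb] := toinl t.
apply: connect_trans Ha _; apply: connect_trans (lift a b) _; by rewrite sym.
Qed.
Definition lift (phi : V -> R) : SV -> R := fun s =>
  match s with inl v => 2 * phi v | inr e => \sum_(a in val e) phi a end.
Definition zf (c : R) : SV -> R := fun s =>
  match s with inl _ => 0 | inr _ => c end.
Definition ce (e0 : Ev) : SV -> R := fun s => (s == inr e0)%:R.

Lemma sum_edges (h : Ev -> V -> R) :
  \sum_(e : Ev) \sum_(a in val e) h e a = \sum_a \sum_(e : Ev | a \in val e) h e a.
Proof. by rewrite (exchange_big_dep xpredT). Qed.

Lemma lap_lift_l phi v : lap S (lift phi) (inl v) = lap E phi v.
Proof.
rewrite /lap degS_l sumS_l /=.
under eq_bigr => e Hv do rewrite (bigD1 v) //=.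
have H : \sum_(i : Ev | v \in val i) phi v = (deg E v)%:R * phi v.
  by rewrite deg_inc mulr_suml; apply: eq_bigr => i _; rewrite mul1r.
rewrite big_split /= G0 H; ring.
Qed.

Lemma lap_lift_r phi e : lap S (lift phi) (inr e) = 0.
Proof.
rewrite /lap degS_r sumS_r /= -mulr_sumr; ring.
Qed.

Lemma sum_inc_const v (c : R) : \sum_(i : Ev | v \in val i) c = (deg E v)%:R * c.
Proof. by rewrite deg_inc mulr_suml; apply: eq_bigr => i _; rewrite mul1r. Qed.

Lemma lap_zf_l c v : lap S (zf c) (inl v) = - ((deg E v)%:R * c).
Proof. by rewrite /lap degS_l sumS_l /= sum_inc_const mulr0 sub0r. Qed.

Lemma lap_zf_r c e : lap S (zf c) (inr e) = 2 * c.
Proof. by rewrite /lap degS_r sumS_r /= big1 ?subr0. Qed.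

Lemma lap_ce_l e0 v : lap S (ce e0) (inl v) = - (v \in val e0)%:R.
Proof.
rewrite /lap degS_l sumS_l /ce /= mulr0 sub0r; congr (- _).
case: (boolP (v \in val e0)) => H.
  rewrite (bigD1 e0) //= eqxx big1 ?addr0 // => e /andP [_ ne].
  by rewrite (inj_eq (@inr_inj _ _)) (negbTE ne).
by rewrite big1 // => e He; case: eqP => // [[ee]]; move: H; rewrite -ee He.
Qed.

Lemma lap_ce_r e0 f : lap S (ce e0) (inr f) = 2 * (f == e0)%:R.
Proof.
rewrite /lap degS_r sumS_r /ce /= big1 ?subr0; first by rewrite (inj_eq (@inr_inj _ _)).
by [].
Qed.

Lemma sum_delta_in (A : {set V}) v : \sum_(a in A) delta R a v = (v \in A)%:R.
Proof.
case: (boolP (v \in A)) => H.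
  rewrite (bigD1 v) //= /delta eqxx big1 ?addr0 // => a /andP [_ ne].
  by rewrite eq_sym (negbTE ne).
by rewrite big1 // => a Ha; rewrite /delta; case: eqP => // e; move: H; rewrite e Ha.
Qed.

Section Main.
Hypothesis HC : connected_graph E.
Hypothesis Hn : (2 <= #|V|)%N.

Lemma m_pos : (0 < #|E|)%N.
Proof.
have [u [v [_ _ uv]]] := card_gt1P Hn.
case/connectP: (HC u v) => [[|w p]] /= Hp Hl; first by rewrite Hl eqxx in uv.
case/andP: Hp => /andP [_ Hin] _.
by apply/card_gt0P; exists [set u; w].
Qed.

Local Notation D := (Dsum R E).

Lemma D_neq0 : D != 0.
Proof. rewrite handshake; apply: mulf_neq0; first by rewrite pnatr_eq0. by rewrite pnatr_eq0 -lt0n m_pos. Qed.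

Definition tG (k : V) : V -> R := fun w => delta R k w - (deg E w)%:R / D.
Definition X0 k := lapsol E (tG k).
Definition X k w := X0 k w - (\sum_u X0 k u * (deg E u)%:R) / D.

Lemma lapX k w : lap E (X k) w = delta R k w - (deg E w)%:R / D.
Proof.
rewrite /X lapB lap_const subr0 /X0 lapsolP //; first by apply: leq_trans Hn.
have H1 : \sum_i delta R k i = 1.
  by rewrite -(sum_delta (fun _ => 1) k); apply: eq_bigr => i _; rewrite mul1r.
by rewrite /tG sumrB H1 -mulr_suml divff ?subrr // D_neq0.
Qed.

Lemma orthX k : \sum_w X k w * (deg E w)%:R = 0.
Proof.
rewrite /X; under eq_bigr do rewrite mulrBl.
rewrite sumrB.
rewrite -mulr_sumr -[\sum_i (deg E i)%:R]/(Dsum R E) mulrVK ?subrr // unitfE; exact: D_neq0.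
Qed.

Local Notation T := (\sum_k (deg E k)%:R * X k k).

Lemma RG : mult_deg_kirchhoff R E = D * T.
Proof.
apply: kirchhoff_formula => //; first exact: D_neq0.
- exact: lapX.
- exact: orthX.
Qed.

Definition zc : R := - (2 * D)^-1.
Definition cc : R := (4 * D)^-1.

Definition y (s : SV) : SV -> R :=
  match s with
  | inl k => fun t => lift (X k) t + zf zc t + cc
  | inr e => fun t => 2^-1 * (\sum_(a in val e) lift (X a) t) + 2^-1 * ce e t + zf zc t - cc
  end.

Lemma DS : Dsum R S = 2 * D.
Proof.
rewrite /Dsum sumS; under eq_bigr do rewrite degS_l.
under [X in _ + X]eq_bigr do rewrite degS_r.
rewrite sumr_const card_Ev -/(Dsum R E) handshake -mulr_natr; ring.
Qed.

Lemma lapY s t : lap S (y s) t = delta R s t - (deg S t)%:R / Dsum R S.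
Proof.
have D0 := D_neq0.
rewrite DS; case: s => [k|e] /=.
  rewrite lapD lapD lap_const addr0.
  case: t => [v|f].
    rewrite lap_lift_l lap_zf_l lapX degS_l /delta (inj_eq (@inl_inj _ _)) /zc.
    by field.
  rewrite lap_lift_r lap_zf_r degS_r /delta /zc /=.
  by field.
rewrite lapB lapD lapD !lapZ lap_sum lap_const subr0.
case: t => [v|f].
  rewrite lap_zf_l lap_ce_l degS_l /delta /zc /=.
  under eq_bigr do rewrite lap_lift_l lapX.
  rewrite sumrB sum_delta_in sumr_const (HS (valP e)).
  by field.
rewrite lap_zf_r lap_ce_r degS_r /delta /zc /= (inj_eq (@inr_inj _ _)).
under eq_bigr do rewrite lap_lift_r.
rewrite big1 //.
by field.
Qed.

Lemma edge_sum (g : V -> R) :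
  \sum_(e : Ev) \sum_(a in val e) g a = \sum_a (deg E a)%:R * g a.
Proof. by rewrite sum_edges; apply: eq_bigr => a _; rewrite sum_inc_const. Qed.

Lemma mE : (#|E|)%:R = D / 2 :> R.
Proof. by rewrite handshake; field. Qed.

Lemma OE (f : SV -> R) : \sum_t f t * (deg S t)%:R =
  \sum_v f (inl v) * (deg E v)%:R + \sum_(e : Ev) f (inr e) * 2.
Proof.
rewrite sumS; congr (_ + _); apply: eq_bigr => ? _; by rewrite ?degS_l ?degS_r.
Qed.

Lemma orthY s : \sum_t y s t * (deg S t)%:R = 0.
Proof.
have D0 := D_neq0.
rewrite OE; case: s => [k|e] /=.
  have H1 : \sum_i (deg E i)%:R * X k i = 0.
    by under eq_bigr do rewrite mulrC; exact: orthX.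
  have -> : \sum_v (lift (X k) (inl v) + zf zc (inl v) + cc) * (deg E v)%:R
      = 2 * \sum_v (deg E v)%:R * X k v + cc * D.
    rewrite /Dsum !mulr_sumr -big_split; apply: eq_bigr => v _ /=; ring.
  have -> : \sum_(e : Ev) (lift (X k) (inr e) + zf zc (inr e) + cc) * 2
      = 2 * \sum_(e : Ev) \sum_(a in val e) X k a + 2 * (zc + cc) * (#|E|)%:R.
    rewrite mulr_sumr -card_Ev -sumr_const mulr_sumr -big_split; apply: eq_bigr => f _ /=; ring.
  rewrite edge_sum H1 mE /zc /cc; by field.
have H1 : forall a, \sum_(g : Ev) \sum_(b in val g) X a b = 0.
  by move=> a; rewrite edge_sum; under eq_bigr do rewrite mulrC; exact: orthX.
have -> : \sum_v (2^-1 * (\sum_(a in val e) lift (X a) (inl v)) + 2^-1 * ce e (inl v) + zf zc (inl v) - cc) * (deg E v)%:R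
    = \sum_(a in val e) \sum_v X a v * (deg E v)%:R - cc * D.
  rewrite exchange_big /= mulr_sumr -sumrB; apply: eq_bigr => v _ /=.
  rewrite /ce /=.
  by rewrite -!mulr_sumr -mulr_suml; field.
rewrite [X in _ + X = 0](_ : _ = \sum_(a in val e) \sum_(g : Ev) \sum_(b in val g) X a b + \sum_(g : Ev) ce e (inr g) + \sum_(g : Ev) 2 * (zc - cc)); last first.
  rewrite exchange_big /= -!big_split; apply: eq_bigr => g _ /=.
  by field.
rewrite sumr_const card_Ev.
rewrite big1; last by move=> a _; exact: orthX.
rewrite big1; last by move=> a _; exact: H1.
have -> : \sum_(g : Ev) ce e (inr g) = 1.
  rewrite (bigD1 e) //= /ce eqxx big1 ?addr0 // => g ne.
  by rewrite (inj_eq (@inr_inj _ _)) (negbTE ne).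
rewrite -(mulr_natr _ #|E|) mE /zc /cc; by field.
Qed.

Lemma RS : mult_deg_kirchhoff R S =
  Dsum R S * \sum_s (deg S s)%:R * y s s.
Proof.
apply: kirchhoff_formula.
- exact: connS.
- by rewrite DS mulf_neq0 ?D_neq0 // pnatr_eq0.
- exact: lapY.
- exact: orthY.
Qed.

Lemma diagE : \sum_(e : Ev) \sum_(a in val e) \sum_(b in val e) X a b
  = 2 * T - (#|V|)%:R + 1.
Proof.
have D0 := D_neq0.
rewrite (sum_edges (fun e a => \sum_(b in val e) X a b)).
transitivity (\sum_a (2 * ((deg E a)%:R * X a a) - (1 - (deg E a)%:R / D))).
  apply: eq_bigr => a _.
  transitivity (\sum_(e : Ev | a \in val e) (X a a + \sum_(b in val e | b != a) X a b)).
    by apply: eq_bigr => e He; rewrite (bigD1 a).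
  rewrite big_split /= sum_inc_const G0.
  have := lapX a a; rewrite /lap /delta eqxx.
  move=> H; rewrite (_ : (true%:R : R) = 1) // in H; lra.
rewrite sumrB -mulr_sumr sumrB sumr_const -mulr_suml -/(Dsum R E) divff //.
suff -> : (#|V|%:R : R) = (#|(xpredT : pred V)|%:R) by lra.
by congr (_%:R); apply: eq_card.
Qed.

Lemma diagS : \sum_s (deg S s)%:R * y s s =
  4 * T - (#|V|)%:R + D / 2 + 2^-1.
Proof.
have D0 := D_neq0.
rewrite sumS.
rewrite [X in X + _](_ : _ = 2 * T + cc * D); last first.
  rewrite /Dsum !mulr_sumr -big_split; apply: eq_bigr => v _ /=.
  rewrite degS_l; ring.
rewrite [X in _ + X](_ : _ = \sum_(e : Ev) \sum_(a in val e) \sum_(b in val e) X a b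
   + \sum_(e : Ev) (1 + 2 * (zc - cc))); last first.
  rewrite -big_split; apply: eq_bigr => e _ /=.
  rewrite degS_r /ce eqxx.
  rewrite (_ : (true%:R : R) = 1) //; by field.
rewrite diagE sumr_const card_Ev -(mulr_natr _ #|E|) mE /zc /cc; by field.
Qed.

End Main.
End Sub.

Theorem theorem2p5 (R : realFieldType) (V : finType) (E : {set {set V}}) :
  simple_graph E -> connected_graph E -> (2 <= #|V|)%N ->
  mult_deg_kirchhoff R (sub_edges E) =
    8 * mult_deg_kirchhoff R E
    + 2 * (#|E|)%:R * (2 * (#|E|)%:R - 2 * (#|V|)%:R + 1).
Proof.
move=> HS HC Hn.
rewrite (@RS R V E HS HC Hn) (@diagS R V E HS HC Hn) (@RG R V E HS HC Hn) (@DS R V E HS) (@mE R V E HS).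
have D0 := @D_neq0 R V E HS HC Hn.
by field.
Qed.
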